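(* For every $N\ge 3$, $\mathbb{E}[\mathcal{N}_1(N)^3]=\frac{N^2(N+1)}{8}$ and the third cumulant vanishes: $\mathbb{E}\big[(\mathcal{N}_1(N)-N/2)^3\big]=0$. For every $N\ge 5$, $$\mathbb{E}[\mathcal{N}_1(N)^4]=\frac{N(15N^3+30N^2+5N-2)}{240},$$ and the fourth cumulant of $\mathcal{N}_1(N)$ equals $-N/120$.
   Context: A random recursive hypergraph (RRH) is the random hypergraph process defined as follows. At size $N=1$ it has vertex set $\{v_1\}$ and edge set $\{\{v_1\}\}$. Given the hypergraph of size $N$ (vertices $v_1,\dots,v_N$, exactly $N$ edges), one chooses an existing edge $e$ uniformly at random, independently of the past, and adds a new vertex $v_{N+1}$ together with the new edge $e\cup\{v_{N+1}\}$. The degree of a vertex is the number of edges containing it. $\mathcal{N}_k(N)$ denotes the number of vertices of degree $k$ in the RRH of size $N$. The fourth cumulant of a random variable $X$ with mean $\mu$ is $\mathbb{E}[(X-\mu)^4]-3\operatorname{Var}[X]^2$. *)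

(* Defs.v *)
From mathcomp Require Import all_boot all_order all_algebra.
Set Implicit Arguments. Unset Strict Implicit. Unset Printing Implicit Defensive.
Import Order.TTheory GRing.Theory Num.Theory.
Local Open Scope ring_scope.

(* A history of the RRH up to size N is a choice sequence s of length N-1:
   s`_j (0-based j) is the (0-based) index of the edge chosen when the
   hypergraph has size j+1, so s`_j < j+1.  Vertices are 0..N-1 (v_{i+1} is i),
   edges are indexed 0..N-1 (edge i is the one created together with vertex i). *)

Definition rrh_edges (s : seq nat) : seq (seq nat) :=
  foldl (fun es c => rcons es (size es :: nth [::] es c)) [:: [:: 0%N]] s.

Definition rrh_deg (s : seq nat) (v : nat) : nat :=
  count (fun e => v \in e) (rrh_edges s).

Definition rrh_Nk (k N : nat) (s : seq nat) : nat :=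
  count (fun v => rrh_deg s v == k) (iota 0 N).

Fixpoint rrh_choices (k : nat) : seq (seq nat) :=
  match k with
  | 0 => [:: [::]]
  | k'.+1 => [seq rcons s c | s <- rrh_choices k', c <- iota 0 k'.+1]
  end.

Definition rrh_prob (s : seq nat) : rat :=
  \prod_(j < size s) (j.+1%:R)^-1.

Definition rrh_E (N : nat) (f : seq nat -> rat) : rat :=
  \sum_(s <- rrh_choices N.-1) rrh_prob s * f s.

Definition rrh_cumulant4 (N : nat) (f : seq nat -> rat) : rat :=
  let mu := rrh_E N f in
  let var := rrh_E N (fun s => (f s - mu) ^+ 2) in
  rrh_E N (fun s => (f s - mu) ^+ 4) - 3 * var ^+ 2.

Definition N1 (N : nat) (s : seq nat) : rat := (rrh_Nk 1 N s)%:R.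

(* Main.v *)
Require Import Defs.
From mathcomp Require Import all_boot all_order all_algebra.
From mathcomp Require Import zify ring lra.
Import Order.TTheory GRing.Theory Num.Theory.
Local Open Scope ring_scope.

Lemma edges_rcons s c : rrh_edges (rcons s c) =
  rcons (rrh_edges s) (size (rrh_edges s) :: nth [::] (rrh_edges s) c).
Proof. by rewrite /rrh_edges foldl_rcons. Qed.

Lemma size_edges s : size (rrh_edges s) = (size s).+1.
Proof.
elim/last_ind: s => [//|s c IH].
by rewrite edges_rcons !size_rcons IH.
Qed.

Lemma edges_bound s i : all (fun x => x <= i)%N (nth [::] (rrh_edges s) i).
Proof.
move: i; elim/last_ind: s => [|s c IH] i; first by case: i => [|[|i]].
rewrite edges_rcons nth_rcons; case: ifP => Hi; first exact: IH.
case: eqP => [->|_] //=; rewrite leqnn /=.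
case: (ltnP c (size (rrh_edges s))) => Hc.
  apply: sub_all (IH c) => x /= Hx; lia.
by rewrite nth_default.
Qed.

Lemma edges_self s i : (i < size (rrh_edges s))%N -> i \in nth [::] (rrh_edges s) i.
Proof.
move: i; elim/last_ind: s => [|s c IH] i; first by case: i => [|[|i]].
rewrite edges_rcons size_rcons nth_rcons => Hi; case: ifP => Hi'; first exact: IH.
have -> : i = size (rrh_edges s) by lia.
by rewrite eqxx mem_head.
Qed.

Lemma deg_rcons s c v : rrh_deg (rcons s c) v =
  (rrh_deg s v + (v \in size (rrh_edges s) :: nth [::] (rrh_edges s) c))%N.
Proof. by rewrite /rrh_deg edges_rcons -cats1 count_cat /= addn0. Qed.

Lemma deg_new s : rrh_deg s (size (rrh_edges s)) = 0%N.
Proof.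
apply/eqP; rewrite /rrh_deg eqn0Ngt -has_count; apply/negP => /(has_nthP [::]) [i Hi Hin].
have := allP (edges_bound s i) _ Hin => /= H; by have := leq_trans Hi H; rewrite ltnn.
Qed.

Lemma deg_ge1 s v : (v < size (rrh_edges s))%N -> (0 < rrh_deg s v)%N.
Proof.
move=> Hv; rewrite /rrh_deg -has_count; apply/(has_nthP [::]); exists v => //.
exact: edges_self.
Qed.

Lemma deg_ge2 s v c : (v < c)%N -> (c < size (rrh_edges s))%N ->
  v \in nth [::] (rrh_edges s) c -> (1 < rrh_deg s v)%N.
Proof.
move=> Hvc Hc Hin; rewrite /rrh_deg -(cat_take_drop c (rrh_edges s)) count_cat.
have H1 : (0 < count (fun e => v \in e) (take c (rrh_edges s)))%N.
  rewrite -has_count; apply/(has_nthP [::]); exists v.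
    by rewrite size_take Hc.
  rewrite (nth_take _ Hvc); apply: edges_self; lia.
have H2 : (0 < count (fun e => v \in e) (drop c (rrh_edges s)))%N.
  rewrite -has_count; apply/(has_nthP [::]); exists 0%N.
    by rewrite size_drop subn_gt0.
  by rewrite nth_drop addn0.
lia.
Qed.

Lemma count_split (T : Type) (a b : pred T) (r : seq T) :
  count a r = (count (fun x => a x && b x) r + count (fun x => a x && ~~ b x) r)%N.
Proof. elim: r => [//|x r IH] /=; rewrite IH; case: (a x); case: (b x) => /=; lia. Qed.

Lemma leaf_step k s c : size s = k -> (c < k.+1)%N ->
  (rrh_Nk 1 k.+2 (rcons s c) + (rrh_deg s c == 1%N) = rrh_Nk 1 k.+1 s + 1)%N.
Proof.
move=> Hs Hc.
have Hsz : size (rrh_edges s) = k.+1 by rewrite size_edges Hs.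
rewrite /rrh_Nk -(addn1 k.+1) iotaD count_cat add0n.
have -> : count (fun v => rrh_deg (rcons s c) v == 1%N) (iota k.+1 1) = 1%N.
  by rewrite /= deg_rcons -Hsz deg_new mem_head.
rewrite -Hsz (count_split _ (fun v => rrh_deg s v == 1%N) (fun v => v \in nth [::] (rrh_edges s) c) (iota 0 (size (rrh_edges s)))).
rewrite [X in (X + _ + _)%N](_ : _ = count (fun v => (rrh_deg s v == 1%N) && (v \notin nth [::] (rrh_edges s) c)) (iota 0 (size (rrh_edges s)))); last first.
  apply: eq_in_count => v; rewrite mem_iota add0n => /andP[_ Hv].
  rewrite deg_rcons in_cons.
  have -> : (v == size (rrh_edges s)) = false by apply/negbTE; rewrite neq_ltn Hv.
  have := @deg_ge1 s v Hv; case: (v \in _) => /=; lia.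
suff -> : count (fun x => (rrh_deg s x == 1%N) && (x \in nth [::] (rrh_edges s) c)) (iota 0 (size (rrh_edges s))) = (rrh_deg s c == 1%N) by lia.
rewrite (@eq_in_count _ _ (fun v => (v == c) && (rrh_deg s c == 1%N))); last first.
  move=> v; rewrite mem_iota add0n => /andP[_ Hv].
  case: (eqVneq v c) => [->|Hne]; first by rewrite edges_self ?andbT // Hsz.
  rewrite [RHS]/= ; apply/negbTE/negP => /andP [H1 H2].
  have := allP (edges_bound s c) _ H2 => /= Hle.
  have := @deg_ge2 s v c; rewrite Hsz; move/eqP: H1 => ->.
  move=> H; have : (1 < 1)%N by apply: H => //; lia.
  by [].
case: (rrh_deg s c == 1%N).
  rewrite (eq_count (a2 := pred1 c)); last by move=> x; rewrite andbT.
  by rewrite count_uniq_mem ?iota_uniq // mem_iota Hsz add0n Hc.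
by apply/eqP; rewrite eqn0Ngt -has_count; apply/hasPn => x _; rewrite andbF.
Qed.

Lemma size_choices k s : s \in rrh_choices k -> size s = k.
Proof.
elim: k s => [|k IH] s; first by rewrite /= inE => /eqP ->.
by case/allpairsPdep => t [c [Ht Hc ->]]; rewrite size_rcons (IH t Ht).
Qed.

Lemma prob_rcons s c : rrh_prob (rcons s c) = rrh_prob s * ((size s).+1%:R)^-1.
Proof. by rewrite /rrh_prob size_rcons big_ord_recr. Qed.

Lemma sum_if (r : seq nat) (P : pred nat) (a b : rat) :
  \sum_(c <- r) (if P c then a else b) = (count P r)%:R * a + (count (predC P) r)%:R * b.
Proof.
elim: r => [|x r IH]; first by rewrite big_nil !mul0r addr0.
rewrite big_cons IH /=; case: (P x) => /=; rewrite !natrD; ring.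
Qed.

Lemma choices_S k : rrh_choices k.+1 = [seq rcons s c | s <- rrh_choices k, c <- iota 0 k.+1].
Proof. by []. Qed.

Lemma E_step k (g : nat -> rat) :
 rrh_E k.+2 (fun s => g (rrh_Nk 1 k.+2 s)) =
 rrh_E k.+1 (fun s => ((rrh_Nk 1 k.+1 s)%:R * g (rrh_Nk 1 k.+1 s)
     + (k.+1%:R - (rrh_Nk 1 k.+1 s)%:R) * g (rrh_Nk 1 k.+1 s).+1) / k.+1%:R).
Proof.
rewrite /rrh_E (choices_S k) big_allpairs_dep big_seq [RHS]big_seq; apply: eq_bigr => s Hs.
have Hsz := @size_choices _ _ Hs.
under eq_bigr => c _ do rewrite prob_rcons Hsz -mulrA.
rewrite -big_distrr; congr (_ * _).
set l := rrh_Nk 1 k.+1 s.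
rewrite -big_distrr mulrC; congr (_ * _).
rewrite big_seq (eq_bigr (fun c => (if rrh_deg s c == 1%N then g l else g l.+1))); last first.
  move=> c; rewrite mem_iota add0n => /andP[_ Hc].
  have := @leaf_step _ _ _ Hsz Hc; case: (rrh_deg s c == 1%N) => /= H.
    by move/addIn: H => ->.
  by rewrite addn0 addn1 in H; rewrite H.
rewrite -big_seq sum_if.
have Hl : l = count (fun v => rrh_deg s v == 1%N) (iota 0 k.+1) by [].
have Hc := count_predC (fun v => rrh_deg s v == 1%N) (iota 0 k.+1).
rewrite size_iota -Hl in Hc.
have -> : count (predC (fun v => rrh_deg s v == 1%N)) (iota 0 k.+1) = (k.+1 - l)%N by lia.
rewrite -Hl natrB; last by lia.
by [].
Qed.

Definition mom (j N : nat) : rat := rrh_E N (fun s => N1 N s ^+ j).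

Lemma E_ext N (f g : seq nat -> rat) : (forall s, f s = g s) -> rrh_E N f = rrh_E N g.
Proof. by move=> H; apply: eq_bigr => s _; rewrite H. Qed.

Lemma E_add N (f g : seq nat -> rat) :
  rrh_E N (fun s => f s + g s) = rrh_E N f + rrh_E N g.
Proof. by rewrite /rrh_E -big_split; apply: eq_bigr => s _; rewrite mulrDr. Qed.

Lemma E_scale N a (f : seq nat -> rat) :
  rrh_E N (fun s => a * f s) = a * rrh_E N f.
Proof. by rewrite /rrh_E big_distrr; apply: eq_bigr => s _; rewrite mulrCA. Qed.

Lemma E_one k : rrh_E k.+1 (fun _ => 1) = 1.
Proof.
elim: k => [|k IH].
  by rewrite /rrh_E [rrh_choices _]/= big_seq1 /rrh_prob big_ord0 mulr1.
have := E_step k (fun _ => 1); rewrite /= => ->.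
transitivity (rrh_E k.+1 (fun _ => 1)); last exact: IH.
apply: E_ext => s.
have hx : 0 < (k.+1%:R : rat) by rewrite ltr0n.
field; lra.
Qed.

Lemma E_const k a : rrh_E k.+1 (fun _ => a) = a.
Proof.
by rewrite -[X in rrh_E _ (fun _ => X)]mulr1 E_scale E_one mulr1.
Qed.

Lemma E_poly k (a0 a1 a2 a3 a4 : rat) :
 rrh_E k.+1 (fun s => a0 + a1 * N1 k.+1 s + a2 * N1 k.+1 s ^+ 2
     + a3 * N1 k.+1 s ^+ 3 + a4 * N1 k.+1 s ^+ 4) =
 a0 + a1 * mom 1 k.+1 + a2 * mom 2 k.+1 + a3 * mom 3 k.+1 + a4 * mom 4 k.+1.
Proof. by rewrite !E_add !E_scale E_const. Qed.

Lemma mom_rec k j (a0 a1 a2 a3 a4 : rat) :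
  (forall x : rat, (x * x ^+ j + (k.+1%:R - x) * (x + 1) ^+ j) / k.+1%:R
      = a0 + a1 * x + a2 * x ^+ 2 + a3 * x ^+ 3 + a4 * x ^+ 4) ->
  mom j k.+2 = a0 + a1 * mom 1 k.+1 + a2 * mom 2 k.+1 + a3 * mom 3 k.+1 + a4 * mom 4 k.+1.
Proof.
move=> H; rewrite [LHS]/mom /N1.
have := E_step k (fun l => l%:R ^+ j); rewrite /= => ->.
rewrite -E_poly; apply: E_ext => s.
by rewrite /N1 -H -[(rrh_Nk 1 k.+1 s).+1]addn1 natrD.
Qed.

Lemma mom_1 j : mom j 1 = 1.
Proof.
rewrite /mom /rrh_E [rrh_choices _]/= big_seq1 /rrh_prob big_ord0 mul1r.
have -> : N1 1 [::] = 1 by [].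
by rewrite expr1n.
Qed.

Section Rec.
Variable k : nat.
Let n : rat := k.+1%:R.
Let hn : n != 0. Proof. by rewrite pnatr_eq0. Qed.

Lemma R1 : mom 1 k.+2 = 1 + (1 - n^-1) * mom 1 k.+1 + 0 * mom 2 k.+1 + 0 * mom 3 k.+1 + 0 * mom 4 k.+1.
Proof. apply: mom_rec => x; rewrite -/n; field; have := ler0n rat k; lra. Qed.
Lemma R2 : mom 2 k.+2 = 1 + (2 - n^-1) * mom 1 k.+1 + (1 - 2 / n) * mom 2 k.+1 + 0 * mom 3 k.+1 + 0 * mom 4 k.+1.
Proof. apply: mom_rec => x; rewrite -/n; field; have := ler0n rat k; lra. Qed.
Lemma R3 : mom 3 k.+2 = 1 + (3 - n^-1) * mom 1 k.+1 + (3 - 3 / n) * mom 2 k.+1 + (1 - 3 / n) * mom 3 k.+1 + 0 * mom 4 k.+1.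
Proof. apply: mom_rec => x; rewrite -/n; field; have := ler0n rat k; lra. Qed.
Lemma R4 : mom 4 k.+2 = 1 + (4 - n^-1) * mom 1 k.+1 + (6 - 4 / n) * mom 2 k.+1 + (4 - 6 / n) * mom 3 k.+1 + (1 - 4 / n) * mom 4 k.+1.
Proof. apply: mom_rec => x; rewrite -/n; field; have := ler0n rat k; lra. Qed.
End Rec.

Lemma M123 k : mom 1 k.+3 = k.+3%:R / 2 /\
  mom 2 k.+3 = k.+3%:R * (3 * k.+3%:R + 1) / 12 /\
  mom 3 k.+3 = k.+3%:R ^+ 2 * (k.+3%:R + 1) / 8.
Proof.
elim: k => [|k [IH1 [IH2 IH3]]].
  rewrite !(R1, R2, R3) !mom_1.
  split; [|split]; by field.
rewrite (R1 k.+2) (R2 k.+2) (R3 k.+2) IH1 IH2 IH3 !mulrSr.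
have hk := ler0n rat k.
split; [|split]; field; lra.
Qed.

Lemma M4 k : mom 4 k.+4.+1 =
  k.+4.+1%:R * (15 * k.+4.+1%:R ^+ 3 + 30 * k.+4.+1%:R ^+ 2 + 5 * k.+4.+1%:R - 2) / 240.
Proof.
elim: k => [|k IH].
  by rewrite !(R1, R2, R3, R4) !mom_1; field.
have [H1 [H2 H3]] := M123 k.+2.
rewrite (R4 k.+4) IH H1 H2 H3 !mulrSr.
have hk := ler0n rat k.
field; lra.
Qed.

Lemma E_sq k a : rrh_E k.+1 (fun s => (N1 k.+1 s - a) ^+ 2) =
  a ^+ 2 - 2 * a * mom 1 k.+1 + mom 2 k.+1.
Proof.
transitivity (rrh_E k.+1 (fun s => a ^+ 2 + (- 2 * a) * N1 k.+1 s + 1 * N1 k.+1 s ^+ 2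
   + 0 * N1 k.+1 s ^+ 3 + 0 * N1 k.+1 s ^+ 4)); first by apply: E_ext => s; ring.
by rewrite E_poly; ring.
Qed.

Lemma E_cub k a : rrh_E k.+1 (fun s => (N1 k.+1 s - a) ^+ 3) =
  - a ^+ 3 + 3 * a ^+ 2 * mom 1 k.+1 - 3 * a * mom 2 k.+1 + mom 3 k.+1.
Proof.
transitivity (rrh_E k.+1 (fun s => - a ^+ 3 + (3 * a ^+ 2) * N1 k.+1 s + (- 3 * a) * N1 k.+1 s ^+ 2
   + 1 * N1 k.+1 s ^+ 3 + 0 * N1 k.+1 s ^+ 4)); first by apply: E_ext => s; ring.
by rewrite E_poly; ring.
Qed.

Lemma E_qua k a : rrh_E k.+1 (fun s => (N1 k.+1 s - a) ^+ 4) =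
  a ^+ 4 - 4 * a ^+ 3 * mom 1 k.+1 + 6 * a ^+ 2 * mom 2 k.+1 - 4 * a * mom 3 k.+1 + mom 4 k.+1.
Proof.
transitivity (rrh_E k.+1 (fun s => a ^+ 4 + (- 4 * a ^+ 3) * N1 k.+1 s + (6 * a ^+ 2) * N1 k.+1 s ^+ 2
   + (- 4 * a) * N1 k.+1 s ^+ 3 + 1 * N1 k.+1 s ^+ 4)); first by apply: E_ext => s; ring.
by rewrite E_poly; ring.
Qed.

Theorem mainTheorem3 :
  (forall N : nat, (3 <= N)%N ->
     rrh_E N (fun s => N1 N s ^+ 3) = (N%:R ^+ 2 * (N%:R + 1)) / 8 /\
     rrh_E N (fun s => (N1 N s - N%:R / 2) ^+ 3) = 0) /\
  (forall N : nat, (5 <= N)%N ->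
     rrh_E N (fun s => N1 N s ^+ 4) =
       N%:R * (15 * N%:R ^+ 3 + 30 * N%:R ^+ 2 + 5 * N%:R - 2) / 240 /\
     rrh_cumulant4 N (N1 N) = - (N%:R / 120)).
Proof.
split.
  move=> N HN; have [k ->] : exists k, N = k.+3 by exists (N - 3)%N; lia.
  have [H1 [H2 H3]] := M123 k.
  split; first exact: H3.
  rewrite (E_cub k.+2) H1 H2 H3.
  have hk := ler0n rat k.
  by field.
move=> N HN; have [k ->] : exists k, N = k.+4.+1 by exists (N - 5)%N; lia.
have [H1 [H2 H3]] := M123 k.+2.
have H4 := M4 k.
split; first exact: H4.
have Emu : rrh_E k.+4.+1 (N1 k.+4.+1) = mom 1 k.+4.+1 by [].
rewrite /rrh_cumulant4 Emu H1 (E_sq k.+4) (E_qua k.+4) H1 H2 H3 H4.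
have hk := ler0n rat k.
by field.
Qed.
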